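(* Let $g$ be a positive integer, let $l\ge 1$, and let $(a,a+g)$ be a consecutive prospective prime pair with gap $g$ in $S_l$. Let $k>l$ and let $\mathring{n}_k^g$ denote the number of pairs in $S_k$ derived from $(a,a+g)$, i.e. the number of tuples $(m_{l+1},\dots,m_k)$ of integers with $0\le m_j\le P_j-1$ such that, with $M=\sum_{j=l+1}^{k}m_jP_{j-1}\#$, both $a+M$ and $a+g+M$ are coprime to $P_k\#$. Then \[\mathring{n}_k^g=\prod_{i=l+1}^{k}(P_i-2)\cdot\prod_{\substack{i=l+1\\ P_i\mid g}}^{k}\frac{P_i-1}{P_i-2}.\]
   Context: $P_k$ denotes the $k$-th prime ($P_1=2$) and $P_k\#=\prod_{i=1}^k P_i$. $S_k=\{N\in\mathbb{N}: 5\le N\le 4+P_k\#\}$. A prospective prime in $S_k$ is an $N\in S_k$ with $\gcd(N,P_k\#)=1$. Two prospective primes $a<b$ in $S_k$ are consecutive if no integer strictly between them is coprime to $P_k\#$; a consecutive prospective prime pair with gap $g$ in $S_k$ is a pair $(a,a+g)$ of consecutive prospective primes in $S_k$. *)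

(* Defs.v *)
From mathcomp Require Import all_boot all_order all_algebra.
Set Implicit Arguments. Unset Strict Implicit. Unset Printing Implicit Defensive.

Lemma ex_prime_gt (n : nat) : exists p, (n < p) && prime p.
Proof. by case: (prime_above n) => p H1 H2; exists p; rewrite H1 H2. Qed.

Definition next_prime (n : nat) : nat := ex_minn (ex_prime_gt n).

(* P k = k-th prime, with P 1 = 2 (P 0 = 1 is an auxiliary value). *)
Fixpoint P (k : nat) : nat :=
  if k is k'.+1 then next_prime (P k') else 1.

Definition primorial (k : nat) : nat := \prod_(1 <= i < k.+1) P i.

Definition in_S (k N : nat) : bool := (5 <= N) && (N <= 4 + primorial k).

Definition prospective (k N : nat) : bool := in_S k N && coprime N (primorial k).

Definition consecutive (k a b : nat) : bool :=
  [&& prospective k a, prospective k b, a < b &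
      [forall i : 'I_b, (a < i) ==> ~~ coprime i (primorial k)]].

Definition cpp_pair (k g a : nat) : bool := consecutive k a (a + g).

(* M = sum_{j=l+1}^k m_j P_{j-1}#, tuple indexed by i < k - l with j = l+1+i *)
Definition offset (l k : nat) (m : {dffun forall i : 'I_(k - l), 'I_(P (l.+1 + i))}) : nat :=
  \sum_(i < k - l) m i * primorial (l + i).

Definition n_derived (l k g a : nat) : nat :=
  #|[set m : {dffun forall i : 'I_(k - l), 'I_(P (l.+1 + i))} |
      coprime (a + offset m) (primorial k) && coprime (a + g + offset m) (primorial k)]|.

(* Main.v *)
Require Import Defs.
From mathcomp Require Import all_boot all_order all_algebra.
Import GRing.Theory Num.Theory.
From mathcomp Require Import zify ring.

Lemma P_spec k : (P k < P k.+1)%N && prime (P k.+1).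
Proof. by rewrite /= /next_prime; case: ex_minnP. Qed.

Lemma P1 : P 1 = 2.
Proof.
rewrite /= /next_prime; case: ex_minnP => m /andP[m1 pm] min.
have := min 2 isT; lia.
Qed.

Lemma P_prime i : (0 < i)%N -> prime (P i).
Proof. by case: i => // i _; case/andP: (P_spec i). Qed.

Lemma P_lt i j : (i < j)%N -> (P i < P j)%N.
Proof.
elim: j => // j IH; rewrite ltnS leq_eqVlt => /orP[/eqP->|/IH h].
  by case/andP: (P_spec j).
by apply: ltn_trans h _; case/andP: (P_spec j).
Qed.

Lemma P_ge3 i : (2 <= i)%N -> (3 <= P i)%N.
Proof. by move=> h; have := @P_lt 1 i h; rewrite P1. Qed.

Lemma primorialS m : primorial m.+1 = primorial m * P m.+1.
Proof. by rewrite /primorial big_nat_recr. Qed.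

Lemma primorial_gt0 m : (0 < primorial m)%N.
Proof.
elim: m => [|m IH]; first by rewrite /primorial big_geq.
by rewrite primorialS muln_gt0 IH prime_gt0 // P_prime.
Qed.

Lemma coprime_primorial m j : (m < j)%N -> coprime (primorial m) (P j).
Proof.
elim: m => [|m IH] h; first by rewrite /primorial big_geq // coprime1n.
have pm := P_prime m.+1 isT; have pj : prime (P j) by apply: P_prime; lia.
rewrite primorialS coprimeMl IH ?(ltnW h) //.
by rewrite prime_coprime // dvdn_prime2 // neq_ltn (P_lt _ _ h).
Qed.

Lemma modp_key p s g : (0 < p)%N -> (s < p)%N ->
  ((s + g) %% p == 0)%N = (s == (p - g %% p) %% p)%N.
Proof.
move=> p0 sp; rewrite -modnDmr.
have hp : (g %% p < p)%N by rewrite ltn_pmod.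
move: (g %% p) hp => h hp.
have [->|h0] := eqVneq h 0.
  by rewrite addn0 subn0 modnn modn_small.
rewrite [(p - h) %% p]modn_small; last by lia.
case: (ltnP (s + h) p) => H.
  rewrite modn_small //; apply/eqP/eqP; lia.
have -> : (s + h = 1 * p + (s + h - p))%N by lia.
rewrite modnMDl modn_small; last by lia.
apply/eqP/eqP; lia.
Qed.

Lemma mul_mod_inj p Q x y : coprime Q p -> (x < p)%N -> (y < p)%N ->
  (Q * x = Q * y %[mod p])%N -> x = y.
Proof.
wlog le : x y / (x <= y)%N.
  move=> H cQ xp yp e; case: (leqP x y) => h; first exact: H.
  by symmetry; apply: H => //; apply: ltnW.
move=> cQ xp yp /esym/eqP; rewrite eqn_mod_dvd ?leq_mul2l ?le ?orbT //.
rewrite -mulnBr Gauss_dvdr; last by rewrite coprime_sym.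
rewrite -eqn_mod_dvd // => /eqP; rewrite !modn_small // => e; by [].
Qed.

Lemma count_p p Q a g : prime p -> coprime Q p ->
  #|[set r : 'I_p | coprime (a + Q * r) p && coprime (a + g + Q * r) p]| =
  (if p %| g then p - 1 else p - 2)%N.
Proof.
move=> pp cQ; have p0 := prime_gt0 pp.
pose h (r : 'I_p) : 'I_p := Ordinal (ltn_pmod (a + Q * r) p0).
have hinj : injective h.
  move=> r r' /(congr1 val) /= /eqP; rewrite eqn_modDl => /eqP e.
  apply: val_inj. have := (mul_mod_inj _ _ _ _ cQ (ltn_ord r) (ltn_ord r') e). by [].
have hbij : bijective h by apply: inj_card_bij.
pose B := [set s : 'I_p | (val s != 0) && ((s + g) %% p != 0)].
have -> : [set r : 'I_p | coprime (a + Q * r) p && coprime (a + g + Q * r) p]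
     = h @^-1: B.
  apply/setP => r; rewrite !inE /= !(coprime_sym _ p) !prime_coprime //.
  rewrite /dvdn modnDml.
  by rewrite (addnAC a g).
rewrite on_card_preimset; last exact: onW_bij.
pose s0 : 'I_p := Ordinal p0.
pose s1 : 'I_p := Ordinal (ltn_pmod (p - g %% p) p0).
rewrite cardsCs.
have -> : ~: B = [set s0; s1].
  apply/setP => s; rewrite !inE negb_and !negbK -!val_eqE /=.
  by rewrite modp_key.
rewrite card_ord cards2 -val_eqE /=.
rewrite /dvdn; case: (eqVneq (g %% p) 0) => [->|g0]; first by rewrite subn0 modnn.
have gp : (g %% p < p)%N by rewrite ltn_pmod.
rewrite modn_small; last by lia.
by have -> : (0 != p - g %% p) = true by apply/eqP; lia.
Qed.

Lemma crt_count M N p (F G : pred nat) : M = (N * p)%N -> coprime N p ->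
  (0 < N)%N -> (0 < p)%N ->
  #|[set t : 'I_M | F (t %% N) && G (t %% p)]| =
  (#|[set t : 'I_N | F t]| * #|[set r : 'I_p | G r]|)%N.
Proof.
move=> eM cNp N0 p0.
pose h (t : 'I_M) : 'I_N * 'I_p := (Ordinal (ltn_pmod t N0), Ordinal (ltn_pmod t p0)).
have hinj : injective h.
  move=> t t' [] /eqP e1 /eqP e2.
  apply: val_inj => /=.
  have : (t == t' %[mod N * p])%N by rewrite chinese_remainder // e1 e2.
  by rewrite -eM !modn_small // => /eqP.
have hbij : bijective h.
  by apply: inj_card_bij => //; rewrite card_prod !card_ord eM.
rewrite -cardsX -(on_card_preimset (onW_bij _ hbij)).
by apply: eq_card => t; rewrite !inE.
Qed.

Definition N_ l n := (\prod_(i < n) P (l.+1 + i))%N.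

Lemma primorial_split l n : primorial (l + n) = (primorial l * N_ l n)%N.
Proof.
elim: n => [|n IH]; first by rewrite addn0 /N_ big_ord0 muln1.
by rewrite addnS primorialS IH /N_ big_ord_recr /= mulnA.
Qed.

Lemma N_gt0 l n : (0 < N_ l n)%N.
Proof.
have := primorial_gt0 (l + n); rewrite primorial_split muln_gt0.
by case/andP.
Qed.

Lemma cop_shift x Q t N W : W = (Q * N)%N ->
  coprime (x + Q * (t %% N)) W = coprime (x + Q * t) W.
Proof.
move=> eW; rewrite -coprime_modl -[RHS]coprime_modl; congr coprime.
have -> : (x + Q * t = (t %/ N) * W + (x + Q * (t %% N)))%N.
  by rewrite {1}(divn_eq t N) eW; ring.
by rewrite modnMDl.
Qed.

Lemma cop_shift2 x Q t p :
  coprime (x + Q * (t %% p)) p = coprime (x + Q * t) p.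
Proof.
rewrite -coprime_modl -[RHS]coprime_modl; congr coprime.
apply/eqP; rewrite eqn_modDl; apply/eqP; exact: modnMmr.
Qed.

Definition R_ l g n := (\prod_(i < n)
   (if P (l.+1 + i) %| g then P (l.+1 + i) - 1 else P (l.+1 + i) - 2))%N.

Lemma count_t l g a n : coprime a (primorial l) -> coprime (a + g) (primorial l) ->
  #|[set t : 'I_(N_ l n) | coprime (a + primorial l * t) (primorial (l + n))
        && coprime (a + g + primorial l * t) (primorial (l + n))]| = R_ l g n.
Proof.
move=> ca cag; set Q := primorial l.
elim: n => [|n IH].
  rewrite /R_ big_ord0 addn0.
  have -> : [set t : 'I_(N_ l 0) | coprime (a + Q * t) Q && coprime (a + g + Q * t) Q]
     = setT.
    apply/setP => t; rewrite !inE.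
    rewrite -(cop_shift a Q t 1 Q) -?(cop_shift (a + g) Q t 1 Q) ?muln1 //.
    by rewrite !modn1 !muln0 !addn0 ca cag.
  by rewrite cardsT card_ord /N_ big_ord0.
have pn := P_prime (l.+1 + n) isT.
set p := P (l.+1 + n).
have ep : primorial (l + n.+1) = (primorial (l + n) * p)%N.
  by rewrite addnS primorialS.
have cNp : coprime (N_ l n) p.
  apply: (coprime_dvdl (n := primorial (l + n))).
    by rewrite primorial_split dvdn_mull.
  by apply: coprime_primorial; lia.
have cQp : coprime Q p by apply: coprime_primorial; lia.
rewrite /R_ big_ord_recr /= -/p -/(R_ l g n) -IH -(count_p p Q a g pn cQp).
rewrite -(crt_count (N_ l n.+1) (N_ l n) p
   (fun t => coprime (a + Q * t) (primorial (l + n)) && coprime (a + g + Q * t) (primorial (l + n)))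
   (fun r => coprime (a + Q * r) p && coprime (a + g + Q * r) p)) ?N_gt0 ?prime_gt0 //; last first.
  by rewrite /N_ big_ord_recr.
apply: eq_card => t; rewrite !inE ep !coprimeMr.
rewrite !(cop_shift _ _ t _ _ (primorial_split l n)) !cop_shift2.
by rewrite -!andbA; congr andb; rewrite andbCA.
Qed.

Lemma radix_lt l n (c : nat -> nat) : (forall i, (i < n)%N -> (c i < P (l.+1 + i))%N) ->
  (\sum_(i < n) c i * primorial (l + i) < primorial (l + n))%N.
Proof.
elim: n => [|n IH] hc; first by rewrite big_ord0 addn0 primorial_gt0.
rewrite big_ord_recr /= addnS primorialS.
have h1 := IH (fun i hi => hc i (ltnW hi)).
have h2 := hc n (ltnSn n).
move: h1 h2; rewrite addSn.
move: (\sum_(i < n) c i * primorial (l + i))%N (primorial (l + n)) (P (l + n).+1) (c n).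
move=> S w b x; nia.
Qed.

Lemma radix_inj l n (c c' : nat -> nat) :
  (forall i, (i < n)%N -> (c i < P (l.+1 + i))%N) ->
  (forall i, (i < n)%N -> (c' i < P (l.+1 + i))%N) ->
  \sum_(i < n) c i * primorial (l + i) = \sum_(i < n) c' i * primorial (l + i) ->
  forall i, (i < n)%N -> c i = c' i.
Proof.
elim: n => [|n IH] hc hc' e i hi //.
have h1 := radix_lt _ _ _ (fun i hi => hc i (ltnW hi)).
have h2 := radix_lt _ _ _ (fun i hi => hc' i (ltnW hi)).
have w0 := primorial_gt0 (l + n).
move: e; rewrite !big_ord_recr /= => e.
have ec : c n = c' n.
  have := congr1 (fun x => x %/ primorial (l + n)) e.
  by rewrite /= !(addnC (\sum_(i < n) _)) !divnMDl // !divn_small // !addn0.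
have es : \sum_(i < n) c i * primorial (l + i) = \sum_(i < n) c' i * primorial (l + i).
  have := congr1 (fun x => x %% primorial (l + n)) e.
  by rewrite /= !(addnC (\sum_(i < n) _)) !modnMDl !modn_small.
move: hi; rewrite ltnS leq_eqVlt => /orP[/eqP->//|hi].
exact: (IH (fun i hi => hc i (ltnW hi)) (fun i hi => hc' i (ltnW hi)) es).
Qed.

Lemma card_T l n : #|{dffun forall i : 'I_n, 'I_(P (l.+1 + i))}| = N_ l n.
Proof.
rewrite card_dep_ffun foldrE big_map /N_.
rewrite big_enum /=; apply: eq_bigr => i _; exact: card_ord.
Qed.


Local Notation Tm l n := {dffun forall i : 'I_n, 'I_(P (l.+1 + i))}.

Lemma count_m l g a n : coprime a (primorial l) -> coprime (a + g) (primorial l) ->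
  #|[set m : {dffun forall i : 'I_n, 'I_(P (l.+1 + i))} |
      coprime (a + \sum_(i < n) m i * primorial (l + i)) (primorial (l + n))
   && coprime (a + g + \sum_(i < n) m i * primorial (l + i)) (primorial (l + n))]|
  = R_ l g n.
Proof.
move=> ca cag.
set Q := primorial l.
pose off (m : Tm l n) := \sum_(i < n) m i * primorial (l + i).
pose cm (m : Tm l n) (j : nat) : nat :=
  if @insub nat (fun x => x < n)%N 'I_n j is Some i then val (m i) else 0.
have e1 m : off m = \sum_(i < n) cm m i * primorial (l + i).
  by apply: eq_bigr => i _; rewrite /cm valK.
have e2 m : forall j, (j < n)%N -> (cm m j < P (l.+1 + j))%N.
  move=> j hj; rewrite /cm; case: insubP => [i _ <-|]; first exact: ltn_ord.
  by rewrite hj.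
have Q0 : (0 < Q)%N := primorial_gt0 l.
have e3 m : (off m < Q * N_ l n)%N.
  by rewrite -primorial_split e1; apply: radix_lt; apply: e2.
have e4 m : (Q %| off m)%N.
  apply: dvdn_sum => i _; apply: dvdn_mull.
  by rewrite primorial_split dvdn_mulr.
have hlt m : (off m %/ Q < N_ l n)%N by rewrite ltn_divLR // mulnC.
pose h (m : Tm l n) : 'I_(N_ l n) := Ordinal (hlt m).
have e5 m : off m = (Q * h m)%N by rewrite /= mulnC divnK.
have hinj : injective h.
  move=> m m' ehm.
  have eo : off m = off m' by rewrite !e5 ehm.
  rewrite !e1 in eo.
  have := radix_inj _ _ _ _ (e2 m) (e2 m') eo.
  move=> H; apply/ffunP => i; apply: val_inj.
  have := H i (ltn_ord i); by rewrite /cm valK.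
have hbij : bijective h by apply: inj_card_bij => //; rewrite card_T card_ord.
rewrite -(count_t l g a n ca cag) -(on_card_preimset (onW_bij _ hbij)).
by apply: eq_card => m; rewrite !inE -e5.
Qed.

Local Open Scope ring_scope.

Theorem theorem1 (g l k a : nat) :
  (0 < g)%N -> (1 <= l)%N -> cpp_pair l g a -> (l < k)%N ->
  ((n_derived l k g a)%:R : rat) =
    (\prod_(l.+1 <= i < k.+1) ((P i)%:R - 2))
    * \prod_(l.+1 <= i < k.+1 | (P i %| g)%N) (((P i)%:R - 1) / ((P i)%:R - 2)).
Proof.
move=> g0 l1 cpp lk.
have [ca cag] : coprime a (primorial l) /\ coprime (a + g) (primorial l).
  move: cpp; rewrite /cpp_pair /consecutive /prospective.
  by case/and4P => /andP[_ ->] /andP[_ ->].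
have -> : n_derived l k g a = R_ l g (k - l).
  rewrite /n_derived /offset.
  have ek : primorial k = primorial (l + (k - l)) by rewrite subnKC // ltnW.
  rewrite ek; exact: count_m.
have E : forall F : nat -> rat,
    \prod_(l.+1 <= i < k.+1) F i = \prod_(i < k - l) F (l.+1 + i).
  move=> F; rewrite -{1}[l.+1]add0n big_addn big_mkord subSS.
  by apply: eq_bigr => i _; rewrite addnC.
rewrite (big_mkcond (fun i => P i %| g)%N) -big_split /= E /R_ natr_prod.
apply: eq_bigr => i _.
have p3 : (3 <= P (l.+1 + i))%N by apply: P_ge3; lia.
move: p3; set p := P (l.+1 + i) => p3.
have nz : ((p - 2)%:R : rat) != 0 by rewrite pnatr_eq0; apply/eqP; lia.
rewrite natrB in nz; last by lia.
case: ifP => d; rewrite natrB ?mulr1 //; last by lia.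
  by rewrite mulrC divfK.
by lia.
Qed.
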